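(* Let $\sigma,\tau,\theta,\eta\in\mathbb{R}$ and $q\in(-1,1]$. Define $\lambda_0=0$ and $\lambda_{n+1}=\frac{1+q\lambda_n}{1-\sigma\tau\lambda_n}$, assumed well defined with $\lambda_n\neq0$ for all $n\ge1$. For $n\ge0$ define the $2\times2$ matrices $$A_n=\begin{pmatrix}1-\tau\sigma\lambda_n & -\sigma(1+q\lambda_n)\\ -\tau(1+q\lambda_n) & 1-\sigma\tau\lambda_n\end{pmatrix},\quad B_n=\begin{pmatrix}q+\sigma\tau\lambda_n & \sigma(1-\lambda_n)\\ \tau(1-\lambda_n) & q+\sigma\tau\lambda_n\end{pmatrix},\quad C_n=\begin{pmatrix}\sigma\lambda_n & 1\\ 1 & \tau\lambda_n\end{pmatrix},$$ and assume every $A_n$ ($n\ge0$) is non-singular. Put $w_k=A_k^{-1}C_k\begin{pmatrix}\theta\\ \eta\end{pmatrix}$ and $\Xi_k=A_k^{-1}B_k$. Let $(\alpha_n)_{n\ge0},(\beta_n)_{n\ge0},(\gamma_n)_{n\ge0},(\delta_n)_{n\ge0},(\varepsilon_n)_{n\ge1},(\varphi_n)_{n\ge1}$ be real sequences satisfying the system (E1)–(E5) described in the context with $\alpha_0=\gamma_0=\delta_0=\varphi_1=0$, $\beta_0=\varepsilon_1=1$, and such that $(\alpha_n,\beta_n)\neq(0,0)$ for all $n\ge0$ and $(\varepsilon_n,\varphi_n)\neq(0,0)$ for all $n\ge1$. Then for all $n\ge0$, $$\begin{pmatrix}\gamma_{n+1}\\ \delta_{n+1}\end{pmatrix}=\sum_{k=0}^{n}\Big(\prod_{j=k+1}^{n}\Xi_j\Big)w_k,$$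 where the product is ordered $\Xi_n\Xi_{n-1}\cdots\Xi_{k+1}$ and the empty product ($k=n$) is the identity (so $(\gamma_1,\delta_1)^T=w_0$). Moreover, setting $\chi_n=\beta_{n-1}\varepsilon_n$ for $n\ge1$, we have $\chi_1=1$ and for all $n\ge1$ $$\big(q+\sigma\tau-\sigma\tau(1-\lambda_{n-1})^2\big)\chi_n+1+\theta\gamma_n+\tau\gamma_n^2+\eta\delta_n+\sigma\delta_n^2-(1-q)\gamma_n\delta_n=\big(1-\sigma\tau(2\lambda_n+q\lambda_n^2)\big)\chi_{n+1}.$$
   Context: The system (E1)–(E5) is: (E1) for $n\ge0$: $\tau\alpha_n\alpha_{n+1}+q\alpha_n\beta_{n+1}+\sigma\beta_n\beta_{n+1}=\alpha_{n+1}\beta_n$; (E2) for $n\ge2$: $\tau\varepsilon_{n-1}\varepsilon_n+q\varepsilon_n\varphi_{n-1}+\sigma\varphi_n\varphi_{n-1}=\varepsilon_{n-1}\varphi_n$; (E3) for $n\ge0$: $\theta\alpha_n+\eta\beta_n+\tau\alpha_n(\gamma_n+\gamma_{n+1})+\sigma\beta_n(\delta_n+\delta_{n+1})+q(\alpha_n\delta_{n+1}+\beta_n\gamma_n)=\beta_n\gamma_{n+1}+\alpha_n\delta_n$; (E4) for $n\ge1$: $\theta\varepsilon_n+\eta\varphi_n+\tau\varepsilon_n(\gamma_n+\gamma_{n-1})+\sigma\varphi_n(\delta_{n-1}+\delta_n)+q(\varphi_n\gamma_n+\delta_{n-1}\varepsilon_n)=\varepsilon_n\delta_n+\varphi_n\gamma_{n-1}$;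 (E5) for $n\ge1$: $1+\theta\gamma_n+\eta\delta_n+\tau\gamma_n^2+\sigma\delta_n^2+\tau(\alpha_{n-1}\varepsilon_n+\alpha_n\varepsilon_{n+1})+\sigma(\varphi_n\beta_{n-1}+\beta_n\varphi_{n+1})+q(\gamma_n\delta_n+\beta_{n-1}\varepsilon_n+\alpha_n\varphi_{n+1})=\gamma_n\delta_n+\beta_n\varepsilon_{n+1}+\varphi_n\alpha_{n-1}$. *)

(* Defs.v *)
From HB Require Import structures.
From mathcomp Require Import all_boot all_order all_algebra.
From mathcomp Require Import reals.
Set Implicit Arguments. Unset Strict Implicit. Unset Printing Implicit Defensive.
Import Order.TTheory GRing.Theory Num.Theory.
Local Open Scope ring_scope.

Section Defs.
Variable R : realType.

Definition mx2 (a b c d : R) : 'M[R]_2 :=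
  \matrix_(i < 2, j < 2)
    if (i == 0 :> nat) then (if (j == 0 :> nat) then a else b)
    else (if (j == 0 :> nat) then c else d).

Definition col2 (x y : R) : 'cV[R]_2 :=
  \col_(i < 2) if (i == 0 :> nat) then x else y.

Fixpoint lam (q s t : R) (n : nat) : R :=
  match n with
  | 0 => 0
  | n'.+1 => (1 + q * lam q s t n') / (1 - s * t * lam q s t n')
  end.

Definition Amx (q s t : R) (n : nat) : 'M[R]_2 :=
  let l := lam q s t n in
  mx2 (1 - t * s * l) (- s * (1 + q * l)) (- t * (1 + q * l)) (1 - s * t * l).

Definition Bmx (q s t : R) (n : nat) : 'M[R]_2 :=
  let l := lam q s t n in
  mx2 (q + s * t * l) (s * (1 - l)) (t * (1 - l)) (q + s * t * l).

Definition Cmx (q s t : R) (n : nat) : 'M[R]_2 :=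
  let l := lam q s t n in
  mx2 (s * l) 1 1 (t * l).

Definition wvec (q s t th et : R) (k : nat) : 'cV[R]_2 :=
  invmx (Amx q s t k) *m Cmx q s t k *m col2 th et.

Definition Xi (q s t : R) (k : nat) : 'M[R]_2 :=
  invmx (Amx q s t k) *m Bmx q s t k.

(* Xi_n Xi_{n-1} ... Xi_{k+1}  (identity if k = n) *)
Definition XiProd (q s t : R) (k n : nat) : 'M[R]_2 :=
  \prod_(j <- rev (iota k.+1 (n - k))) Xi q s t j.

Definition chi (be ep : nat -> R) (n : nat) : R := be n.-1 * ep n.

End Defs.

(* Main.v *)
Require Import Defs.
From HB Require Import structures.
From mathcomp Require Import all_boot all_order all_algebra.
From mathcomp Require Import reals.
From mathcomp Require Import ring.
Import Order.TTheory GRing.Theory Num.Theory.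
Local Open Scope ring_scope.

Lemma mx2_col2 (R : realType) (a b c d x y : R) :
  mx2 a b c d *m col2 x y = col2 (a * x + b * y) (c * x + d * y).
Proof.
apply/matrixP => i j; rewrite !mxE !big_ord_recr big_ord0 !mxE /=.
by case: (i == 0 :> nat); rewrite add0r.
Qed.

Lemma col2D (R : realType) (a b c d : R) :
  col2 a b + col2 c d = col2 (a + c) (b + d).
Proof.
by apply/matrixP => i j; rewrite !mxE; case: (i == 0 :> nat).
Qed.

Lemma col20 (R : realType) : col2 (0 : R) 0 = 0.
Proof. by apply/matrixP => i j; rewrite !mxE; case: (i == 0 :> nat). Qed.

Lemma cancel_eq (R : realType) (b L Rr X Y : R) :
  b != 0 -> X = Y -> b * (L - Rr) = Y - X -> L = Rr.
Proof.
move=> hb hxy h; apply/eqP; rewrite -subr_eq0.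
have /eqP : b * (L - Rr) = 0 by rewrite h hxy subrr.
by rewrite mulf_eq0 (negbTE hb).
Qed.

Arguments cancel_eq {R b L Rr X Y}.

Lemma XiProd_nn (R : realType) (q s t : R) k : XiProd q s t k k = 1.
Proof. by rewrite /XiProd subnn /= big_nil. Qed.

Lemma XiProd_S (R : realType) (q s t : R) k n : (k <= n)%N ->
  XiProd q s t k n.+1 = Xi q s t n.+1 *m XiProd q s t k n.
Proof.
move=> hk; rewrite /XiProd subSn // -[(n - k).+1]addn1 iotaD cats1 rev_rcons big_cons.
by rewrite addSn subnKC.
Qed.

Theorem mainTheorem2 (R : realType) (s t th et q : R)
  (al be ga de ep ph : nat -> R)
  (hq : -1 < q <= 1)
  (hwd : forall n : nat, 1 - s * t * lam q s t n != 0)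
  (hlam : forall n : nat, (1 <= n)%N -> lam q s t n != 0)
  (hA : forall n : nat, Amx q s t n \in unitmx)
  (E1 : forall n : nat,
     t * al n * al n.+1 + q * al n * be n.+1 + s * be n * be n.+1
     = al n.+1 * be n)
  (E2 : forall n : nat, (2 <= n)%N ->
     t * ep n.-1 * ep n + q * ep n * ph n.-1 + s * ph n * ph n.-1
     = ep n.-1 * ph n)
  (E3 : forall n : nat,
     th * al n + et * be n + t * al n * (ga n + ga n.+1)
     + s * be n * (de n + de n.+1) + q * (al n * de n.+1 + be n * ga n)
     = be n * ga n.+1 + al n * de n)
  (E4 : forall n : nat, (1 <= n)%N ->
     th * ep n + et * ph n + t * ep n * (ga n + ga n.-1)
     + s * ph n * (de n.-1 + de n) + q * (ph n * ga n + de n.-1 * ep n)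
     = ep n * de n + ph n * ga n.-1)
  (E5 : forall n : nat, (1 <= n)%N ->
     1 + th * ga n + et * de n + t * ga n ^+ 2 + s * de n ^+ 2
     + t * (al n.-1 * ep n + al n * ep n.+1)
     + s * (ph n * be n.-1 + be n * ph n.+1)
     + q * (ga n * de n + be n.-1 * ep n + al n * ph n.+1)
     = ga n * de n + be n * ep n.+1 + ph n * al n.-1)
  (h0 : al 0%N = 0 /\ ga 0%N = 0 /\ de 0%N = 0 /\ ph 1%N = 0 /\ be 0%N = 1 /\ ep 1%N = 1)
  (hab : forall n : nat, al n != 0 \/ be n != 0)
  (hep : forall n : nat, (1 <= n)%N -> ep n != 0 \/ ph n != 0) :
  (forall n : nat,
     col2 (ga n.+1) (de n.+1)
     = \sum_(k < n.+1) (XiProd q s t k n *m wvec q s t th et k)) /\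
  chi be ep 1%N = 1 /\
  (forall n : nat, (1 <= n)%N ->
     (q + s * t - s * t * (1 - lam q s t n.-1) ^+ 2) * chi be ep n
     + 1 + th * ga n + t * ga n ^+ 2 + et * de n + s * de n ^+ 2
     - (1 - q) * ga n * de n
     = (1 - s * t * (2 * lam q s t n + q * lam q s t n ^+ 2)) * chi be ep n.+1).
Proof.
case: h0 => a0 [g0 [d0 [p1 [b0 e1]]]].
set l := lam q s t.
have Hal : forall n, al n = s * l n * be n /\ be n != 0.
  elim=> [|n [Ha Hb]].
    by rewrite a0 b0 /l /= mulr0 mul0r oner_neq0.
  have Ha1 : al n.+1 = s * l n.+1 * be n.+1.
    have := E1 n; rewrite Ha => E.
    apply: (mulfI Hb); apply: (mulfI (hwd n)).
    rewrite /l /= -/l.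
    rewrite [RHS](_ : _ = be n * (s * (1 + q * l n) * be n.+1) * ((1 - s * t * l n) / (1 - s * t * l n))); last by ring.
    rewrite divff ?hwd // mulr1.
    transitivity (al n.+1 * be n - t * (s * l n * be n) * al n.+1); first by ring.
    rewrite -{1}E; ring.
  split=> //; case: (hab n.+1) => // h.
  by apply: (contraNneq _ h); rewrite Ha1 => ->; rewrite mulr0.
have Hph : forall n, (1 <= n)%N -> ph n = t * l n.-1 * ep n /\ ep n != 0.
  elim=> [//|n IH _].
  case: n IH => [_|n IH].
    by rewrite p1 e1 /l /= mulr0 mul0r oner_neq0.
  case: (IH isT) => Hp He.
  have Hp1 : ph n.+2 = t * l n.+1 * ep n.+2.
    have := E2 n.+2 isT; rewrite /= Hp /= => E.
    apply: (mulfI He); apply: (mulfI (hwd n)).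
    rewrite /l /= -/l.
    rewrite [RHS](_ : _ = ep n.+1 * (t * (1 + q * l n) * ep n.+2) * ((1 - s * t * l n) / (1 - s * t * l n))); last by ring.
    rewrite divff ?hwd // mulr1.
    transitivity (ep n.+1 * ph n.+2 - s * ph n.+2 * (t * l n * ep n.+1)); first by ring.
    rewrite -E; ring.
  split=> //; case: (hep n.+2 isT) => // h.
  by apply: (contraNneq _ h); rewrite Hp1 => ->; rewrite mulr0.
have step : forall n, col2 (ga n.+1) (de n.+1)
    = Xi q s t n *m col2 (ga n) (de n) + wvec q s t th et n.
  move=> n.
  have key : Amx q s t n *m col2 (ga n.+1) (de n.+1)
      = Bmx q s t n *m col2 (ga n) (de n) + Cmx q s t n *m col2 th et.
    rewrite /Amx /Bmx /Cmx !mx2_col2 col2D -/l.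
    case: (Hal n) => Ha Hb; case: (Hph n.+1 isT) => /= Hp He.
    congr col2.
      apply: (cancel_eq Hb (E3 n)); rewrite Ha; ring.
    apply: (cancel_eq He (E4 n.+1 isT)); rewrite /= Hp; ring.
  rewrite /Xi /wvec -!mulmxA -mulmxDr -key mulKmx //.
split.
  elim=> [|n IH].
    by rewrite big_ord1 XiProd_nn mul1mx step g0 d0 col20 mulmx0 add0r.
  rewrite step IH mulmx_sumr [RHS]big_ord_recr /= XiProd_nn mul1mx; congr (_ + _).
  apply: eq_bigr => k _; rewrite XiProd_S ?mulmxA //.
  by rewrite -ltnS ltn_ord.
split; first by rewrite /chi /= b0 e1 mulr1.
case=> [//|m _].
have := E5 m.+1 isT; rewrite /= /chi /=.
case: (Hal m) => Ha _; case: (Hal m.+1) => Ha1 _.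
case: (Hph m.+1 isT) => /= Hp _; case: (Hph m.+2 isT) => /= Hp1 _.
rewrite Ha Ha1 Hp Hp1 -/l => E.
apply/eqP; rewrite -subr_eq0; apply/eqP.
rewrite -(subrr (ga m.+1 * de m.+1 + be m.+1 * ep m.+2 + t * l m * ep m.+1 * (s * l m * be m))).
rewrite -{1}E; ring.
Qed.
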